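(* Let $K$ be a field of characteristic zero, $(\mathfrak{g},s)$ a finite-dimensional solvable Lie algebra with filtration over $K$, $f\in\mathfrak{g}^*$, and let $l\in M(f)$ be a nonzero element with $(x-f(x))l=0$ for all $x\in\mathfrak{pv}(f)$. If $y\in\mathfrak{g}$ and $\lambda\in K$ satisfy $(y-\lambda)l=0$, then $y\in\mathfrak{pv}(f)$ and $\lambda=f(y)$.
   Context: A filtration $s$ on $\mathfrak{g}$ is a chain $\mathfrak{g}=\mathfrak{g}_0\supseteq\mathfrak{g}_1\supseteq\dots\supseteq\mathfrak{g}_k=\{0\}$ of ideals of $\mathfrak{g}$ with $\dim\mathfrak{g}_{i-1}/\mathfrak{g}_i\le1$. For $f\in\mathfrak{g}^*$ let $f_i=f|_{\mathfrak{g}_i}$, $\mathfrak{g}_i^{f_i}=\{x\in\mathfrak{g}_i\mid f([x,\mathfrak{g}_i])=0\}$, and let $\mathfrak{pv}(f)=\sum_{i=0}^k\mathfrak{g}_i^{f_i}$ be the Vergne polarization (a subalgebra, maximal isotropic for $(x,y)\mapsto f([x,y])$). $M(f)=U(\mathfrak{g})\otimes_{U(\mathfrak{pv}(f))}K_f$, where $K_f$ is the one-dimensional $U(\mathfrak{pv}(f))$-module on which $x$ acts by $f(x)$. *)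

(* Defs.v *)
From HB Require Import structures.
From mathcomp Require Import all_boot all_order all_algebra.
Set Implicit Arguments. Unset Strict Implicit. Unset Printing Implicit Defensive.
Import Order.TTheory GRing.Theory Num.Theory.
Local Open Scope ring_scope.

Section LieDefs.
Variables (K : fieldType) (V : vectType K).

Record lie_algebra (br : V -> V -> V) : Prop := LieAlgebra {
  lie_linl : forall (a : K) x y z, br (a *: x + y) z = a *: br x z + br y z;
  lie_linr : forall (a : K) x y z, br z (a *: x + y) = a *: br z x + br z y;
  lie_alt : forall x, br x x = 0;
  lie_jacobi : forall x y z, br x (br y z) + br y (br z x) + br z (br x y) = 0
}.

(* Derived series: D^0 = g, D^(n+1) = [D^n, D^n] (span of brackets; by
   bilinearity it suffices to bracket basis vectors). *)
Fixpoint derived (br : V -> V -> V) (n : nat) : {vspace V} :=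
  match n with
  | 0 => fullv
  | n'.+1 => let B := vbasis (derived br n') in
             <<[seq br u v | u <- B, v <- B]>>%VS
  end.

Definition solvable_lie (br : V -> V -> V) : Prop :=
  exists n, derived br n = 0%VS.

Definition lie_ideal (br : V -> V -> V) (I : {vspace V}) : Prop :=
  forall x y, y \in I -> br x y \in I.

(* A filtration s : g = g_0 ⊇ g_1 ⊇ ... ⊇ g_k = 0 of ideals with
   dim g_(i-1)/g_i <= 1 (indices > k are irrelevant). *)
Definition filtration (br : V -> V -> V) (k : nat) (gs : nat -> {vspace V}) : Prop :=
  [/\ gs 0 = fullv, gs k = 0%VS,
      forall i, (i <= k)%N -> lie_ideal br (gs i),
      forall i, (i < k)%N -> (gs i.+1 <= gs i)%VS
    & forall i, (i < k)%N -> (\dim (gs i) <= (\dim (gs i.+1)).+1)%N].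

Definition linear_functional (f : V -> K) : Prop :=
  forall (a : K) x y, f (a *: x + y) = a * f x + f y.

Definition stab_mem (br : V -> V -> V) (f : V -> K) (gi : {vspace V}) (x : V) : Prop :=
  x \in gi /\ forall y, y \in gi -> f (br x y) = 0.

Definition pv (br : V -> V -> V) (k : nat) (gs : nat -> {vspace V}) (f : V -> K)
  (x : V) : Prop :=
  exists xs : 'I_k.+1 -> V,
    (forall i : 'I_k.+1, stab_mem br f (gs i) (xs i)) /\ x = \sum_(i < k.+1) xs i.

Record lie_module (br : V -> V -> V) (M : lmodType K) (act : V -> M -> M) : Prop :=
  LieModule {
  lmod_linl : forall (a : K) x y m, act (a *: x + y) m = a *: act x m + act y m;
  lmod_linr : forall (a : K) x m n, act x (a *: m + n) = a *: act x m + act x n;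
  lmod_bracket : forall x y m, act (br x y) m = act x (act y m) - act y (act x m)
}.

(* (M, act, v0) is the induced module U(g) ⊗_{U(p)} K_f (p given by the
   predicate P), characterised by its universal property: v0 satisfies
   x.v0 = f(x) v0 for x in p, and for every g-module N and w in N with the
   same property there is a unique g-module morphism M -> N sending v0 to w. *)
Definition induced_module (br : V -> V -> V) (P : V -> Prop) (f : V -> K)
  (M : lmodType K) (act : V -> M -> M) (v0 : M) : Prop :=
  (forall x, P x -> act x v0 = f x *: v0) /\
  forall (N : lmodType K) (actN : V -> N -> N), lie_module br actN ->
  forall w : N, (forall x, P x -> actN x w = f x *: w) ->
  exists phi : M -> N,
    [/\ (forall (a : K) m n, phi (a *: m + n) = a *: phi m + phi n),
        (forall x m, phi (act x m) = actN x (phi m)),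
        phi v0 = w &
        forall psi : M -> N,
          (forall (a : K) m n, psi (a *: m + n) = a *: psi m + psi n) ->
          (forall x m, psi (act x m) = actN x (psi m)) ->
          psi v0 = w -> forall m, psi m = phi m].

End LieDefs.

(* Main.v *)
Require Import Defs.
From mathcomp Require Import all_boot all_order all_algebra.
From Stdlib Require Import Classical.
Import GRing.Theory.
Local Open Scope ring_scope.

Lemma bil_facts (K : fieldType) (V : vectType K) (B : V -> V -> K)
  (Bl : forall a u v w, B (a *: u + v) w = a * B u w + B v w) :
  [/\ forall w, B 0 w = 0, forall u v w, B (u + v) w = B u w + B v w,
      forall a u w, B (a *: u) w = a * B u w &
      forall n (F : 'I_n -> V) w, B (\sum_(i < n) F i) w = \sum_(i < n) B (F i) w].
Proof.
have B0 : forall w, B 0 w = 0.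
  move=> w; have := Bl 1 0 0 w; rewrite scale1r addr0 mul1r.
  by move/(congr1 (fun t => t - B 0 w)); rewrite subrr addrK.
have BD : forall u v w, B (u + v) w = B u w + B v w.
  by move=> u v w; rewrite -[u]scale1r Bl mul1r scale1r.
split => //.
- by move=> a u w; rewrite -[a *: u]addr0 Bl B0 addr0.
- move=> n F w; elim/big_rec2: _ => [|i x y _ <-]; first exact: B0.
  by rewrite BD.
Qed.

Lemma key (K : fieldType) (V : vectType K) (B : V -> V -> K)
  (Bl : forall a u v w, B (a *: u + v) w = a * B u w + B v w)
  (Br : forall a u v w, B w (a *: u + v) = a * B w u + B w v)
  (Ba : forall u, B u u = 0)
  (H W : {vspace V}) (x : V) (HW : (H <= W)%VS) (xW : x \in W) (xH : x \notin H)
  (Wdec : forall w, w \in W -> exists2 h, h \in H & exists a, w = h + a *: x)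
  (Rad : forall z, z \in W -> (forall w, w \in W -> B z w = 0) -> z \in H) :
  exists a, [/\ a \in H, forall h, h \in H -> B a h = 0 & B a x != 0].
Proof.
have [B0l BDl BZl BSl] := @bil_facts K V B Bl.
have Bl' : forall a u v w, B w (a *: u + v) = a * B w u + B w v by [].
have [B0r BDr BZr BSr] := @bil_facts K V (fun u v => B v u) Bl'.
have Bas : forall u v, B u v = - B v u.
  move=> u v; have := Ba (u + v); rewrite BDl /= BDr BDr Ba Ba add0r addr0.
  by move/eqP; rewrite addr_eq0 => /eqP.
apply: NNPP => Hno.
have Hrad : forall r, r \in H -> (forall h, h \in H -> B r h = 0) -> B r x = 0.
  move=> r rH rr; apply/eqP; apply: NNPP => /negP nz.
  by apply: Hno; exists r; split.
set m := \dim H.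
set b := vbasis H.
have bH : forall i : 'I_m, b`_i \in H.
  by move=> i; apply: vbasis_mem; rewrite mem_nth // size_tuple.
have expand : forall h, h \in H -> h = \sum_(i < m) coord b i h *: b`_i.
  by move=> h hH; exact: coord_vbasis.
set G : 'M[K]_m := \matrix_(i, j) B b`_i b`_j.
set v : 'rV[K]_m := \row_j B x b`_j.
have vG : (v <= G)%MS.
  rewrite submxE; move: (cokermx G) (mulmx_coker G) => C HC.
  apply/eqP/matrixP => i j; rewrite !mxE.
  have GC : forall i', \sum_k G i' k * C k j = 0.
    by move=> i'; have := congr1 (fun A : 'M[K]_m => A i' j) HC; rewrite !mxE.
  pose r := \sum_(k < m) C k j *: b`_k.
  have rH : r \in H by apply: memv_suml => k _; apply: memvZ.
  have rr : forall h, h \in H -> B r h = 0.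
    move=> h hH; rewrite Bas (expand h hH) BSl.
    have -> : \sum_(i0 < m) B (coord b i0 h *: b`_i0) r
        = \sum_(i0 < m) coord b i0 h * \sum_k G i0 k * C k j.
      apply: eq_bigr => i0 _; rewrite BZl /r BSr; congr (_ * _).
      by apply: eq_bigr => k0 _; rewrite BZr mxE mulrC.
    by rewrite big1 ?oppr0 // => i0 _; rewrite GC mulr0.
  have E : B x r = 0 by apply/eqP; rewrite Bas oppr_eq0; apply/eqP; exact: Hrad.
  by rewrite -[RHS]E /r BSr; apply: eq_bigr => k _; rewrite BZr mxE mulrC.
case/submxP: vG => d dv.
pose h0 := \sum_(i < m) d 0 i *: b`_i.
have h0H : h0 \in H by apply: memv_suml => i _; apply: memvZ.
pose x' := x - h0.
have x'b : forall j : 'I_m, B x' b`_j = 0.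
  move=> j; have := congr1 (fun A : 'rV[K]_m => A 0 j) dv.
  rewrite [in LHS]mxE [in RHS]mxE => Ej.
  rewrite /x' -[- h0]scaleN1r BDl BZl Ej /h0 BSl.
  rewrite [X in _ + -1 * X](_ : _ = \sum_j0 d 0 j0 * G j0 j).
    by rewrite mulN1r subrr.
  by apply: eq_bigr => i _; rewrite BZl mxE.
have x'H : forall h, h \in H -> B x' h = 0.
  move=> h hH; rewrite (expand h hH) BSr big1 // => i _.
  by rewrite BZr x'b mulr0.
have x'W : x' \in W by rewrite /x' memvB // (subvP HW).
have : x' \in H.
  apply: Rad => // w wW.
  have [h hH [a ->]] := Wdec w wW.
  have -> : x = x' + h0 by rewrite /x' subrK.
  rewrite BDr BZr BDr Ba x'H // x'H // ; by rewrite addr0 mulr0 addr0.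
move=> x'H'; case/negP: xH.
have -> : x = x' + h0 by rewrite /x' subrK.
by rewrite memvD.
Qed.

Lemma wdec (K : fieldType) (V : vectType K) (H W : {vspace V}) (z : V)
  (HW : (H <= W)%VS) (dW : (\dim W <= (\dim H).+1)%N) (zW : z \in W) (zH : z \notin H) :
  forall w, w \in W -> exists2 h, h \in H & exists a, w = h + a *: z.
Proof.
have z0 : z != 0 by apply: contraNneq zH => ->; exact: mem0v.
have cap0 : \dim (H :&: <[z]>) = 0%N.
  case E1: (\dim (H :&: <[z]>)) => [//|n].
  case/negP: zH; have : (H :&: <[z]> == <[z]>)%VS.
    by rewrite eqEdim capvSr dim_vline z0 E1.
  move/eqP=> E; rewrite memvE -E; exact: capvSl.
have dS := dimv_sum_cap H <[z]>; rewrite cap0 dim_vline z0 addn0 addn1 in dS.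
have : (H + <[z]> == W)%VS.
  by rewrite eqEdim subv_add HW -memvE zW dS.
move/eqP=> E w; rewrite -E => /memv_addP [h hH [u /vlineP [a ->] ->]].
by exists h => //; exists a.
Qed.


Definition pvj (K : fieldType) (V : vectType K) (br : V -> V -> V) (k : nat)
  (gs : nat -> {vspace V}) (f : V -> K) (j : nat) (x : V) : Prop :=
  exists xs : 'I_k.+1 -> V,
    [/\ forall i : 'I_k.+1, stab_mem br f (gs i) (xs i),
        forall i : 'I_k.+1, (i < j)%N -> xs i = 0 & x = \sum_(i < k.+1) xs i].
Arguments pvj {K V} br k gs f j x.

Theorem lemma3p2 (K : fieldType) (HK : [pchar K] =i pred0)
  (V : vectType K) (br : V -> V -> V) (HL : lie_algebra br)
  (Hsol : solvable_lie br)
  (k : nat) (gs : nat -> {vspace V}) (Hs : filtration br k gs)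
  (f : V -> K) (Hf : linear_functional f)
  (M : lmodType K) (act : V -> M -> M) (HM : lie_module br act) (v0 : M)
  (Hind : induced_module br (pv br k gs f) f act v0)
  (l : M) (Hl0 : l != 0)
  (Hl : forall x, pv br k gs f x -> act x l = f x *: l)
  (y : V) (lam : K) (Hy : act y l = lam *: l) :
  pv br k gs f y /\ lam = f y.
Proof.
case: HL => brl brr bra _.
case: HM => actl actr actb.
case: Hs => gs0 gsk gsid gsS gsd.
have f0 : f 0 = 0.
  have := Hf 1 0 0; rewrite scale1r addr0 mul1r.
  by move/(congr1 (fun t => t - f 0)); rewrite subrr addrK.
have fD : forall u v, f (u + v) = f u + f v.
  by move=> u v; rewrite -[u]scale1r Hf mul1r scale1r.
have fZ : forall a u, f (a *: u) = a * f u.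
  by move=> a u; rewrite -[a *: u]addr0 Hf f0 addr0.
have br0 : forall w, br 0 w = 0.
  move=> w; have := brl 1 0 0 w; rewrite scale1r addr0 scale1r.
  by move/(congr1 (fun t => t - br 0 w)); rewrite subrr addrK.
have br0r : forall w, br w 0 = 0.
  move=> w; have := brr 1 0 0 w; rewrite scale1r addr0 scale1r.
  by move/(congr1 (fun t => t - br w 0)); rewrite subrr addrK.
have brDl : forall u v w, br (u + v) w = br u w + br v w.
  by move=> u v w; rewrite -[u]scale1r brl !scale1r.
have brDr : forall u v w, br w (u + v) = br w u + br w v.
  by move=> u v w; rewrite -[u]scale1r brr !scale1r.
have bras : forall u v, br u v = - br v u.
  move=> u v; have := bra (u + v); rewrite brDl !brDr !bra add0r addr0.
  by move/eqP; rewrite addr_eq0 => /eqP.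
have act0 : forall m, act 0 m = 0.
  move=> m; have := actl 1 0 0 m; rewrite scale1r addr0 scale1r.
  by move/(congr1 (fun t => t - act 0 m)); rewrite subrr addrK.
have act0r : forall x, act x 0 = 0.
  move=> x; have := actr 1 x 0 0; rewrite scale1r addr0 scale1r.
  by move/(congr1 (fun t => t - act x 0)); rewrite subrr addrK.
have actZr : forall x a m, act x (a *: m) = a *: act x m.
  by move=> x a m; rewrite -[a *: m]addr0 actr act0r addr0.
have scl : forall c d, c *: l = d *: l -> c = d.
  move=> c d /eqP; rewrite -subr_eq0 -scalerBl scaler_eq0 (negbTE Hl0) orbF.
  by rewrite subr_eq0 => /eqP.
have stab0 : forall i, stab_mem br f (gs i) 0.
  by move=> i; split; [exact: mem0v | move=> y0 _; rewrite br0 f0].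
have stabL : forall i a u v, stab_mem br f (gs i) u -> stab_mem br f (gs i) v ->
    stab_mem br f (gs i) (a *: u + v).
  move=> i a u v [uG uS] [vG vS]; split; first by rewrite memvD // memvZ.
  by move=> w wG; rewrite brl Hf uS // vS // mulr0 addr0.
have pvjL : forall j a u v, pvj br k gs f j u -> pvj br k gs f j v ->
    pvj br k gs f j (a *: u + v).
  move=> j a u v [xs [xsS xs0 ->]] [ys [ysS ys0 ->]].
  exists (fun i => a *: xs i + ys i); split.
  - by move=> i; apply: stabL.
  - by move=> i ij; rewrite xs0 // ys0 // scaler0 addr0.
  - by rewrite scaler_sumr -big_split.
have pvjM : forall i j x, (i <= j)%N -> pvj br k gs f j x -> pvj br k gs f i x.
  move=> i j x ij [xs [xsS xs0 ->]]; exists xs; split => // i0 i0i.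
  by apply: xs0; apply: leq_trans ij.
have pvj0 : forall j, pvj br k gs f j 0.
  move=> j; exists (fun _ => 0); split => //; by rewrite big1.
have pvjS : forall j a, (j <= k)%N -> stab_mem br f (gs j) a -> pvj br k gs f j a.
  move=> j a jk aS; exists (fun i : 'I_k.+1 => if (i == j :> nat) then a else 0).
  split.
  - by move=> i; case: eqP => [->|_] //.
  - by move=> i ij; case: eqP => // E; move: ij; rewrite E ltnn.
  - rewrite (bigD1 (Ordinal (jk : (j < k.+1)%N))) //= eqxx big1 ?addr0 // => i.
    move=> ne; case: eqP => // E; case/negP: ne; apply/eqP/val_inj => /=; exact: E.
have pvjpv : forall x, pvj br k gs f 0 x -> pv br k gs f x.
  by move=> x [xs [xsS _ ->]]; exists xs.
pose C j := forall x c, x \in gs j -> act x l = c *: l ->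
  pvj br k gs f j x /\ c = f x.
have main : forall n j, (j + n = k)%N -> C j.
  elim=> [|n IH]; move=> jj.
    rewrite addn0 => -> x c; rewrite gsk memv0 => /eqP -> Hx; split => //.
    by rewrite f0; apply: scl; rewrite -Hx act0 scale0r.
  move=> jn; have hjk : (jj < k)%N by rewrite -jn addnS ltnS leq_addr.
  have IHj : C jj.+1 by apply: IH; rewrite addSn -addnS.
  move=> x c xG Hx.
  case: (boolP (x \in gs jj.+1)) => xH.
    by have [P E] := IHj x c xH Hx; split => //; apply: pvjM P.
  case: (classic (exists a, stab_mem br f (gs jj) a /\ a \notin gs jj.+1)).
    case=> a [aS aH].
    have [h hH [al Ex]] := @wdec _ _ _ _ _ (gsS jj hjk) (gsd jj hjk) (proj1 aS) aH x xG.
    have Eh : h = (- al) *: a + x by rewrite Ex addrCA scaleNr addNr addr0.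
    have aP : pvj br k gs f jj a by apply: pvjS => //; exact: ltnW.
    have Ha : act a l = f a *: l by apply: Hl; apply: pvjpv; apply: pvjM aP.
    have Hh : act h l = (c - al * f a) *: l.
      by rewrite Eh actl Hx Ha scalerA scalerBl mulNr scaleNr addrC.
    have [P E] := IHj h _ hH Hh.
    split.
      by rewrite Ex addrC; apply: pvjL => //; apply: pvjM P.
    by rewrite Ex addrC Hf -E addrC subrK.
  move=> Hno; exfalso.
  pose B u v := f (br u v).
  have Bl : forall a u v w, B (a *: u + v) w = a * B u w + B v w.
    by move=> a u v w; rewrite /B brl Hf.
  have Br : forall a u v w, B w (a *: u + v) = a * B w u + B w v.
    by move=> a u v w; rewrite /B brr Hf.
  have Ba : forall u, B u u = 0 by move=> u; rewrite /B bra f0.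
  have [|a [aH aS aX]] := @key _ _ B Bl Br Ba _ _ _ (gsS jj hjk) xG xH
      (@wdec _ _ _ _ _ (gsS jj hjk) (gsd jj hjk) xG xH).
    move=> z zW zS; apply: NNPP => zH; apply: Hno; exists z; split; last exact/negP.
    by split.
  have aP : pvj br k gs f jj.+1 a by apply: pvjS => //; split.
  have Ha : act a l = f a *: l by apply: Hl; apply: pvjpv; apply: pvjM aP.
  have axG : br a x \in gs jj.+1 by rewrite bras memvN; apply: gsid.
  have Hax : act (br a x) l = 0 *: l.
    by rewrite actb Hx Ha !actZr Hx Ha !scalerA mulrC subrr scale0r.
  have [_ E] := IHj _ _ axG Hax.
  by move: aX; rewrite /B -E eqxx.
have [P _] := main k 0%N (add0n k) y lam (ltac:(by rewrite gs0 memvf)) Hy.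
have [_ E] := main k 0%N (add0n k) y lam (ltac:(by rewrite gs0 memvf)) Hy.
split => //; exact: pvjpv.
Qed.
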